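(* Let $k\ge 2$ and $b>0$. There exists a constant $c>0$ depending only on $k$ and $b$ such that for every finite set $Z$ and every $S\subseteq\{0,1,\dots,k\}^Z$ with $F_S\ge k^{b|Z|}$, there exists $W\subseteq Z$ with $|W|\ge c|Z|$ and $S|_W\supseteq\{1,\dots,k\}^W$.
   Context: For a finite set $Z$, let ${\mathcal U}$ be the cover of $\{0,1,\dots,k\}^Z$ consisting of all sets of the form $\prod_{z\in Z}\{i_z\}^{\rm c}$ (complement taken in $\{0,1,\dots,k\}$) with $1\le i_z\le k$ for each $z\in Z$. For $S\subseteq\{0,1,\dots,k\}^Z$, $F_S$ denotes the minimal number of sets in ${\mathcal U}$ needed to cover $S$. $S|_W$ denotes the set of restrictions to $W$ of the elements of $S$. *)

(* Defs.v *)
From mathcomp Require Import all_boot.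
From Stdlib Require Import Reals.
Set Implicit Arguments. Unset Strict Implicit. Unset Printing Implicit Defensive.

(* Points of {0,1,...,k}^Z are finite functions Z -> 'I_k.+1.
   A set of the cover U is indexed by i : Z -> {1..k}, i.e. a finite function
   Z -> 'I_k.+1 with i z != 0 for all z; it is the product of complements
   prod_z {i z}^c = [set x | forall z, x z != i z]. *)

Definition Uset (Z : finType) (k : nat) (i : {ffun Z -> 'I_k.+1})
  : {set {ffun Z -> 'I_k.+1}} :=
  [set x : {ffun Z -> 'I_k.+1} | [forall z, x z != i z]].

Definition Uindex (Z : finType) (k : nat) (i : {ffun Z -> 'I_k.+1}) : bool :=
  [forall z, i z != ord0].

Definition Ucover (Z : finType) (k : nat) (S : {set {ffun Z -> 'I_k.+1}})
  (C : {set {ffun Z -> 'I_k.+1}}) : bool :=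
  [forall i in C, Uindex i] &&
  (S \subset \bigcup_(i in C) Uset i).

(* The default value
   #|{ffun Z -> 'I_k.+1}| of the big minimum is an upper bound on the size
   of the cover by all of U (which exists when k >= 1 ... and covers everything
   when k >= 2), so it never affects the value when k >= 2. *)
Definition FS (Z : finType) (k : nat) (S : {set {ffun Z -> 'I_k.+1}}) : nat :=
  \big[minn/#|{ffun Z -> 'I_k.+1}|]_(C : {set {ffun Z -> 'I_k.+1}} | Ucover S C) #|C|.

(* S|_W contains {1,...,k}^W: every g : W -> {1..k} is the restriction to W
   of some element of S (g is represented by a function on Z whose values
   outside W are irrelevant). *)
Definition restr_contains_full (Z : finType) (k : nat)
  (S : {set {ffun Z -> 'I_k.+1}}) (W : {set Z}) : Prop :=
  forall g : {ffun Z -> 'I_k.+1}, (forall z, z \in W -> g z != ord0) ->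
    exists2 x, x \in S & forall z, z \in W -> x z = g z.

(* Main.v *)
Require Import Defs.
From mathcomp Require Import all_boot zify.
Set Implicit Arguments. Unset Strict Implicit. Unset Printing Implicit Defensive.

Section Comb.
Variables (Z : finType) (k : nat).
Hypothesis hk : 1 < k.
Local Notation P := {ffun Z -> 'I_k.+1}.

Definition covD (D : {set Z}) (i x : P) : bool := [forall z in D, x z != i z].
Definition UcD (D : {set Z}) (S : {set P}) (C : {set P}) : bool :=
  [forall i in C, Uindex i] && [forall x in S, [exists i in C, covD D i x]].
Definition FSD (D : {set Z}) (S : {set P}) : nat :=
  \big[minn/#|{ffun Z -> 'I_k.+1}|]_(C : {set P} | UcD D S C) #|C|.

Lemma bigmin_le (I : finType) (Q : pred I) (F : I -> nat) d j :
  Q j -> \big[minn/d]_(i | Q i) F i <= F j.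
Proof.
move=> hj; rewrite -big_filter.
have : j \in [seq i <- index_enum I | Q i] by rewrite mem_filter hj mem_index_enum.
elim: [seq i <- index_enum I | Q i] => //= x s IH; rewrite inE big_cons.
case/orP => [/eqP <-|/IH h]; first exact: geq_minl.
exact: leq_trans (geq_minr _ _) h.
Qed.

Lemma FSD_le D S C : UcD D S C -> FSD D S <= #|C|.
Proof. by move=> h; rewrite /FSD; apply: bigmin_le. Qed.

Definition one : 'I_k.+1 := inord 1.
Definition two : 'I_k.+1 := inord 2.
Lemma val_one : val one = 1.
Proof. by rewrite /one /= inordK // ltnS ltnW. Qed.
Lemma val_two : val two = 2.
Proof. by rewrite /two /= inordK. Qed.
Lemma one0 : one != ord0.
Proof. by rewrite -val_eqE /= val_one. Qed.
Lemma two0 : two != ord0.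
Proof. by rewrite -val_eqE /= val_two. Qed.
Lemma one_two : one != two.
Proof. by rewrite -val_eqE /= val_one val_two. Qed.

Definition other (a : 'I_k.+1) : 'I_k.+1 := if a == one then two else one.
Lemma other_neq a : other a != a.
Proof.
rewrite /other; case: (eqVneq a one) => [->|h]; first by rewrite eq_sym one_two.
by rewrite eq_sym.
Qed.
Lemma other0 a : other a != ord0.
Proof. rewrite /other; case: (a == one); [exact: two0 | exact: one0]. Qed.

Definition ix (x : P) : P := [ffun z => other (x z)].
Lemma ix_legal x : Uindex (ix x).
Proof. by apply/forallP => z; rewrite ffunE other0. Qed.
Lemma ix_cov D x : covD D (ix x) x.
Proof. by apply/forall_inP => z _; rewrite ffunE eq_sym other_neq. Qed.

Definition Call : {set P} := [set i | Uindex i].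
Lemma Call_cov D S : UcD D S Call.
Proof.
apply/andP; split; first by apply/forall_inP => i; rewrite inE.
apply/forall_inP => x _; apply/exists_inP; exists (ix x); last exact: ix_cov.
by rewrite inE ix_legal.
Qed.

Lemma FSD_attain D S : exists2 C, UcD D S C & FSD D S = #|C|.
Proof.
have [C0 h0 e0] : exists2 C, UcD D S C & (FSD D S = #|C| \/ FSD D S = #|{ffun Z -> 'I_k.+1}|).
  rewrite /FSD; apply: (big_rec (fun v => exists2 C, UcD D S C & (v = #|C| \/ v = #|{ffun Z -> 'I_k.+1}|))).
    by exists Call; [exact: Call_cov | right].
  move=> C v hC [C' hC' hv]; case: (leqP #|C| v) => hle.
    by exists C; [done | left].
  by exists C'.
case: e0 => e0; first by exists C0.
exists Call; first exact: Call_cov.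
apply/eqP; rewrite eqn_leq FSD_le ?Call_cov //= e0; exact: max_card.
Qed.

Definition upd (i : P) (z0 : Z) (v : 'I_k.+1) : P := [ffun z => if z == z0 then v else i z].
Definition sl (S : {set P}) (z0 : Z) (a : 'I_k.+1) : {set P} := [set x in S | x z0 == a].

Lemma upd_legal i z0 v : Uindex i -> v != ord0 -> Uindex (upd i z0 v).
Proof. move=> /forallP h hv; apply/forallP => z; rewrite ffunE; case: (z == z0) => //. Qed.

Lemma FSD_split (D : {set Z}) (S : {set P}) (z0 : Z) (a : 'I_k.+1) : z0 \in D -> a != ord0 ->
  FSD D S <= FSD (D :\ z0) S + FSD (D :\ z0) (sl S z0 a).
Proof.
move=> hz ha.
have [C1 /andP[/forall_inP l1 /forall_inP c1] ->] := FSD_attain (D :\ z0) S.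
have [C2 /andP[/forall_inP l2 /forall_inP c2] ->] := FSD_attain (D :\ z0) (sl S z0 a).
set C := [set upd i z0 a | i in C1] :|: [set upd i z0 (other a) | i in C2].
apply: (leq_trans (FSD_le (C := C) _)).
  apply/andP; split.
    apply/forall_inP => j; rewrite inE => /orP[] /imsetP[i hi ->]; apply: upd_legal.
    - exact: l1. - exact: ha. - exact: l2. - exact: other0.
  apply/forall_inP => x hx.
  case: (eqVneq (x z0) a) => hxa.
    have : x \in sl S z0 a by rewrite /sl inE hx hxa eqxx.
    move=> /c2 /exists_inP [i hi /forall_inP hc].
    apply/exists_inP; exists (upd i z0 (other a)).
      by rewrite /C inE; apply/orP; right; apply: imset_f.
    apply/forall_inP => z hzD; rewrite ffunE; case: (eqVneq z z0) => [->|hne].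
      by rewrite hxa eq_sym other_neq.
    by apply: hc; rewrite !inE hne hzD.
  move: (c1 x hx) => /exists_inP [i hi /forall_inP hc].
  apply/exists_inP; exists (upd i z0 a).
    by rewrite /C inE; apply/orP; left; apply: imset_f.
  apply/forall_inP => z hzD; rewrite ffunE; case: (eqVneq z z0) => [->|hne] //.
  by apply: hc; rewrite !inE hne hzD.
apply: (leq_trans (leq_card_setU _ _).1).
by apply: leq_add; apply: leq_imset_card.
Qed.


Definition shat (S : {set P}) (W : {set Z}) : bool :=
  [forall g : P, [forall z in W, g z != ord0] ==> [exists x in S, [forall z in W, x z == g z]]].
Definition Sh (D : {set Z}) (S : {set P}) : {set {set Z}} :=
  [set W : {set Z} | (W \subset D) && shat S W].

Lemma shat_mono (S S' : {set P}) W : S \subset S' -> shat S W -> shat S' W.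
Proof.
move=> /subsetP hs /forallP h; apply/forallP => g; apply/implyP => hg.
have /exists_inP [x hx hxg] := implyP (h g) hg.
by apply/exists_inP; exists x; [apply: hs | ].
Qed.

Lemma Sh_monoD (D D' : {set Z}) S : D' \subset D -> Sh D' S \subset Sh D S.
Proof.
move=> hD; apply/subsetP => W; rewrite !inE => /andP[hW ->].
by rewrite (subset_trans hW hD).
Qed.

Lemma Sh_monoS D (S S' : {set P}) : S \subset S' -> Sh D S \subset Sh D S'.
Proof.
move=> hS; apply/subsetP => W; rewrite !inE => /andP[-> h] /=.
exact: shat_mono h.
Qed.

Lemma shat_ext (S : {set P}) z0 (W : {set Z}) :
  (forall a : 'I_k, shat (sl S z0 (lift ord0 a)) W) -> shat S (z0 |: W).
Proof.
move=> h; apply/forallP => g; apply/implyP => /forall_inP hg.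
have hg0 : g z0 != ord0 by apply: hg; rewrite !inE eqxx.
case: (unliftP ord0 (g z0)) => [a ea|e]; last by rewrite -e eqxx in hg0.
have hgW : [forall z in W, g z != ord0].
  by apply/forall_inP => z hz; apply: hg; rewrite !inE hz orbT.
have := implyP (forallP (h a) g) hgW.
move=> /exists_inP [x]; rewrite /sl inE => /andP[hx /eqP hx0] /forall_inP hxg.
apply/exists_inP; exists x => //; apply/forall_inP => z; rewrite !inE.
case/orP => [/eqP ->|hz]; first by rewrite hx0 ea.
exact: hxg.
Qed.

Lemma KM (T : finType) (A : 'I_k -> {set T}) :
  \sum_a #|A a| <= (k - 1) * (#|\bigcup_a A a| + #|\bigcap_a A a|).
Proof.
have e : forall B : {set T}, #|B| = \sum_t (t \in B : nat).
  by move=> B; rewrite -sum1_card big_mkcond /=; apply: eq_bigr => t _; case: (t \in B).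
rewrite e (eq_bigr (fun a => \sum_t (t \in A a : nat))); last by move=> a _; rewrite e.
rewrite exchange_big /= !e -big_split /= big_distrr /=.
apply: leq_sum => t _.
have k0 : 0 < k by apply: ltnW.
case: (boolP [forall a, t \in A a]) => [/forallP hall|].
  have -> : \sum_(a < k) (t \in A a : nat) = k.
    by rewrite (eq_bigr (fun _ => 1)) ?sum1_card ?card_ord // => a _; rewrite hall.
  have -> : t \in \bigcap_a A a by apply/bigcapP => a _; exact: hall.
  have -> : t \in \bigcup_a A a by apply/bigcupP; exists (Ordinal k0) => //; apply: hall.
  rewrite /=; case: k hk => // k' hk'; rewrite subSS; lia.
rewrite negb_forall => /existsP [a0 ha0].
rewrite (bigD1 a0) //= (negbTE ha0) add0n.
case: (boolP (t \in \bigcup_a A a)) => hu.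
  rewrite mulnDr; apply: leq_trans _ (leq_addr _ _).
  rewrite /= muln1; apply: (@leq_trans (\sum_(i < k | i != a0) 1)).
    by apply: leq_sum => a _; exact: leq_b1.
  by rewrite sum1_card cardC1 card_ord subn1.
have -> : \sum_(a | a != a0) (t \in A a : nat) = 0.
  apply/eqP; rewrite sum_nat_eq0; apply/forall_inP => a _.
  by apply: contraNT hu => hta; apply/bigcupP; exists a => //; move: hta; case: (t \in A a).
by [].
Qed.


Lemma leq_expr m n e : m <= n -> m ^ e <= n ^ e.
Proof. by move=> h; elim: e => // e IH; rewrite !expnS leq_mul. Qed.

Lemma Sh_step (D : {set Z}) (S : {set P}) z0 : z0 \in D ->
  #|\bigcup_a Sh (D :\ z0) (sl S z0 (lift ord0 a))| +
  #|\bigcap_a Sh (D :\ z0) (sl S z0 (lift ord0 a))| <= #|Sh D S|.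
Proof.
move=> hz; set A := fun a : 'I_k => Sh (D :\ z0) (sl S z0 (lift ord0 a)).
rewrite -!/(A _).
have k0 : 0 < k by apply: ltnW.
set I := \bigcap_a A a.
set Im := [set z0 |: W | W in I].
have hI : forall W, W \in I -> (W \subset D :\ z0) /\ (forall a, shat (sl S z0 (lift ord0 a)) W).
  move=> W /bigcapP hW; split; first by have := hW (Ordinal k0) isT; rewrite inE => /andP[].
  by move=> a; have := hW a isT; rewrite inE => /andP[].
have hnz : forall W, W \in I -> z0 \notin W.
  move=> W /hI [/subsetP hs _]; apply/negP => /hs; by rewrite !inE eqxx.
have cIm : #|Im| = #|I|.
  apply: card_in_imset => W1 W2 h1 h2 e.
  by rewrite -(setU1K (hnz _ h1)) e setU1K ?hnz.
have hU : \bigcup_a A a \subset Sh (D :\ z0) S.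
  apply/bigcupsP => a _; apply: Sh_monoS; apply/subsetP => x; rewrite /sl inE => /andP[].
  by [].
have hdis : [disjoint Sh (D :\ z0) S & Im].
  rewrite disjoint_subset; apply/subsetP => W; rewrite inE => /andP[/subsetP hs _].
  rewrite inE; apply/negP => /imsetP [W' _ eW].
  by have := hs z0; rewrite eW !inE eqxx /= => /(_ isT).
have hsub : Sh (D :\ z0) S :|: Im \subset Sh D S.
  apply/subsetP => W; rewrite inE => /orP[].
    by apply/subsetP; apply: Sh_monoD; apply: subsetDl.
  move=> /imsetP [W' hW' ->]; have [hs hsh] := hI _ hW'.
  rewrite inE; apply/andP; split; last exact: shat_ext.
  apply/subsetP => z; rewrite !inE => /orP[/eqP -> //|hzW].
  by have := subsetP hs z hzW; rewrite !inE => /andP[].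
apply: leq_trans (subset_leq_card hsub).
have := (leq_card_setU (Sh (D :\ z0) S) Im).2; rewrite hdis => /eqP ->.
by rewrite cIm leq_add2r subset_leq_card.
Qed.

Lemma main_ineq q p : 0 < q -> q * (k - 1) ^ p <= k ^ p ->
  forall (D : {set Z}) (S : {set P}), q ^ #|D| * FSD D S <= #|Sh D S| ^ p * q.+1 ^ #|D|.
Proof.
move=> q0 hqp D; move: {2}#|D| (erefl #|D|) => n.
elim: n D => [|n IH] D hD S.
  rewrite hD !expn0 mul1n muln1.
  have D0 := cards0_eq hD.
  case: (set_0Vmem S) => [-> | [x hx]].
    have : FSD D set0 <= #|(set0 : {set P})|.
      apply: FSD_le; apply/andP; split; apply/forall_inP => i; by rewrite inE.
    by rewrite cards0 leqn0 => /eqP ->.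
  have h1 : FSD D S <= 1.
    rewrite -(cards1 (ix x)); apply: FSD_le; apply/andP; split.
      by apply/forall_inP => i; rewrite inE => /eqP ->; exact: ix_legal.
    apply/forall_inP => y _; apply/exists_inP; exists (ix x); first by rewrite inE.
    by apply/forall_inP => z; rewrite D0 inE.
  apply: leq_trans h1 _; rewrite expn_gt0; apply/orP; left.
  apply/card_gt0P; exists set0; rewrite inE sub0set /=.
  apply/forallP => g; apply/implyP => _; apply/exists_inP; exists x => //.
  by apply/forall_inP => z; rewrite inE.
have [z0 hz0] : exists z0, z0 \in D by apply/card_gt0P; rewrite hD.
have hD' : #|D :\ z0| = n by move: hD; rewrite (cardsD1 z0) hz0 add1n => -[].
rewrite hD.
set F := FSD D S; set F' := FSD (D :\ z0) S.
have hsh' : #|Sh (D :\ z0) S| <= #|Sh D S|.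
  by apply: subset_leq_card; apply: Sh_monoD; apply: subsetDl.
case: (leqP (q * F) (q.+1 * F')) => hc.
  have IH' := IH _ hD' S; rewrite -/F' hD' in IH'.
  rewrite expnS -mulnA mulnCA.
  apply: leq_trans (leq_mul (leqnn (q ^ n)) hc) _.
  rewrite mulnCA expnS (mulnCA _ q.+1); rewrite leq_mul2l /=.
  apply: leq_trans IH' _; apply: leq_mul => //; exact: leq_expr.
have k0 : 0 < k by apply: ltnW.
pose f := fun a : 'I_k => #|Sh (D :\ z0) (sl S z0 (lift ord0 a))|.
case: (@arg_minnP _ (Ordinal k0) xpredT f isT) => am _ ham.
set Fa := FSD (D :\ z0) (sl S z0 (lift ord0 am)).
have hsplit : F <= F' + Fa by apply: FSD_split => //; exact: neq_lift.
have hF : F <= q.+1 * Fa by nia.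
have IHa := IH _ hD' (sl S z0 (lift ord0 am)); rewrite -/Fa in IHa.
have hks : k * f am <= (k - 1) * #|Sh D S|.
  apply: leq_trans (_ : \sum_a f a <= _).
    rewrite -[k in k * _]card_ord -sum_nat_const; apply: leq_sum => a _; exact: ham.
  apply: leq_trans (KM _) _; rewrite leq_mul2l; apply/orP; right.
  exact: Sh_step.
have hq : q * f am ^ p <= #|Sh D S| ^ p.
  have kp : 0 < k ^ p by rewrite expn_gt0 k0.
  rewrite -(leq_pmul2l kp) mulnCA -expnMn.
  apply: leq_trans (leq_mul (leqnn q) (leq_expr p hks)) _.
  by rewrite expnMn mulnA leq_mul2r hqp orbT.
rewrite expnS -mulnA.
apply: leq_trans (leq_mul (leqnn q) (leq_mul (leqnn (q ^ n)) hF)) _.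
rewrite hD' in IHa.
rewrite (mulnCA (q ^ n)).
apply: leq_trans (leq_mul (leqnn q) (leq_mul (leqnn q.+1) IHa)) _.
apply: leq_trans (_ : _ <= (q * f am ^ p) * (q.+1 * q.+1 ^ n)) _.
  by rewrite /f; nia.
by rewrite -expnS leq_mul2r hq orbT.
Qed.

Lemma FS_FSD (S : {set P}) : FS S = FSD setT S.
Proof.
rewrite /FS /FSD; apply: eq_bigl => C; rewrite /Ucover /UcD; congr (_ && _).
apply/subsetP/forall_inP => [h x hx|h x hx].
  have /bigcupP [i hi hxi] := h x hx.
  apply/exists_inP; exists i => //; apply/forall_inP => z _.
  by move: hxi; rewrite inE => /forallP.
have /exists_inP [i hi /forall_inP hc] := h x hx.
apply/bigcupP; exists i => //; rewrite inE; apply/forallP => z; exact: hc.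
Qed.

Lemma shat_restr (S : {set P}) W : shat S W -> restr_contains_full S W.
Proof.
move=> /forallP h g hg.
have /exists_inP [x hx /forall_inP hxg] := implyP (h g) (introT forall_inP hg).
by exists x => // z hz; apply/eqP; apply: hxg.
Qed.

End Comb.

Lemma sum_sets_pow (T : finType) r :
  \sum_(W : {set T}) r ^ (#|T| - #|W|) = r.+1 ^ #|T|.
Proof.
set n := #|T|.
rewrite -addn1 expnDn.
rewrite (partition_big (fun W : {set T} => (inord #|W| : 'I_n.+1)) xpredT) //=.
apply: eq_bigr => j _.
have e : forall W : {set T}, (inord #|W| == j :> 'I_n.+1) = (#|W| == j).
  move=> W; rewrite -val_eqE /= inordK // ltnS; exact: max_card.
rewrite (eq_bigl (fun W : {set T} => #|W| == j)) => [|W]; last by rewrite e.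
rewrite (eq_bigr (fun _ => r ^ (n - j))) => [|W /eqP ->] //.
rewrite sum_nat_const exp1n muln1.
have -> : #|[pred W : {set T} | #|W| == j]| = #|[set W : {set T} | #|W| == j]|.
  by apply: eq_card => W; rewrite inE.
by rewrite card_draws.
Qed.

Lemma count_small (T : finType) (Wf : {set {set T}}) m r : 0 < r ->
  (forall W, W \in Wf -> #|W| <= m) -> #|Wf| * r ^ (#|T| - m) <= r.+1 ^ #|T|.
Proof.
move=> r0 hW; rewrite -sum_sets_pow -sum_nat_const.
apply: leq_trans (_ : \sum_(W in Wf) r ^ (#|T| - #|W|) <= _).
  apply: leq_sum => W hw; apply: leq_pexp2l => //; apply: leq_sub2l; exact: hW.
rewrite [X in _ <= X](bigID (fun W => W \in Wf)) /=; exact: leq_addr.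
Qed.

Lemma leq_expr' m n e : m <= n -> m ^ e <= n ^ e.
Proof. by move=> h; elim: e => // e IH; rewrite !expnS leq_mul. Qed.

Lemma bern a p : a ^ p * (a + p) <= a * a.+1 ^ p.
Proof.
elim: p => [|p IH]; first by rewrite expn0 mul1n addn0 muln1.
rewrite !expnS.
have h1 : a ^ p <= a.+1 ^ p by apply: leq_expr'.
nia.
Qed.

Lemma qk_ineq k q : 1 < k -> q * (k - 1) ^ (q * (k - 1)) <= k ^ (q * (k - 1)).
Proof.
move=> hk; set a := k - 1; set p := q * a.
have ka : k = a.+1 by rewrite /a; lia.
have a0 : 0 < a by rewrite /a; lia.
have := bern a p; rewrite -ka => h.
rewrite -(leq_pmul2l a0); apply: leq_trans h; rewrite /p; nia.
Qed.


From Stdlib Require Import Reals Lra.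
Open Scope R_scope.

Lemma INR_expn (a n : nat) : INR (expn a n) = INR a ^ n.
Proof. elim: n => [|n IH]; first by rewrite expn0. by rewrite expnS mult_INR IH. Qed.

Lemma ln_le' x y : 0 < x -> x <= y -> ln x <= ln y.
Proof. move=> hx [h|->]; [left; exact: ln_increasing | right]; done. Qed.

Lemma ln_succ_le (q : nat) : (0 < q)%nat -> ln (INR q.+1) - ln (INR q) <= / INR q.
Proof.
move=> hq.
have q0 : 0 < INR q by apply: lt_0_INR; apply/ltP.
have e : INR q.+1 = INR q * (1 + / INR q) by rewrite S_INR; field; lra.
rewrite e ln_mult; [|lra|]; last by have := Rinv_0_lt_compat _ q0; lra.
have h : 1 + / INR q < exp (/ INR q) by apply: exp_ineq1; apply: Rgt_not_eq; apply: Rinv_0_lt_compat.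
have hp : 0 < 1 + / INR q by have := Rinv_0_lt_compat _ q0; lra.
have := ln_increasing _ _ hp h.
rewrite ln_exp; lra.
Qed.

Lemma final_real (k q p r n m F Sh : nat) (b : R) :
  (1 < k)%nat -> (0 < q)%nat -> (0 < p)%nat -> (1 < r)%nat -> (m <= n)%nat ->
  (expn q n * F <= expn Sh p * expn q.+1 n)%nat ->
  (Sh * expn r (n - m) <= expn r.+1 n)%nat ->
  Rpower (INR k) (b * INR n) <= INR F ->
  / INR q <= b * ln (INR k) / 3 ->
  INR p * / INR r <= b * ln (INR k) / 3 ->
  b * ln (INR k) / (3 * INR p * ln (INR r)) * INR n <= INR m.
Proof.
move=> hk hq hp hr hmn H1 H2 H3 hq3 hr3.
have hN : (expn q n * F * expn r ((n - m) * p) <= expn r.+1 (n * p) * expn q.+1 n)%nat.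
  rewrite !expnM.
  apply: leq_trans (_ : (expn Sh p * expn q.+1 n * expn (expn r (n - m)) p <= _)%nat).
    by rewrite leq_mul2r H1 orbT.
  rewrite mulnAC -expnMn leq_mul2r; apply/orP; right; exact: leq_expr'.
have q0 : 0 < INR q by apply: lt_0_INR; apply/ltP.
have q1 : 0 < INR q.+1 by apply: lt_0_INR; apply/ltP.
have r0 : 0 < INR r by apply: lt_0_INR; apply/ltP; lia.
have r1 : 0 < INR r.+1 by apply: lt_0_INR; apply/ltP.
have rgt1 : 1 < INR r by apply: (lt_INR 1); apply/ltP.
have lnr : 0 < ln (INR r) by rewrite -ln_1; apply: ln_increasing; lra.
have p0 : 0 < INR p by apply: lt_0_INR; apply/ltP.
have kgt1 : 1 < INR k by apply: (lt_INR 1); apply/ltP.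
have lnk : 0 < ln (INR k) by rewrite -ln_1; apply: ln_increasing; lra.
have hRp : 0 < Rpower (INR k) (b * INR n) by rewrite /Rpower; apply: exp_pos.
have F0 : 0 < INR F by lra.
have hlnF : b * INR n * ln (INR k) <= ln (INR F).
  by rewrite -[X in X <= _]ln_exp; apply: ln_le' => //; apply: exp_pos.
have hR := le_INR _ _ (elimT leP hN).
rewrite !mult_INR !INR_expn in hR.
have pq := pow_lt _ n q0.
have pr := pow_lt _ ((n - m) * p)%nat r0.
have pr1 := pow_lt _ (n * p)%nat r1.
have pq1 := pow_lt _ n q1.
have hl := ln_le' (Rmult_lt_0_compat _ _ (Rmult_lt_0_compat _ _ pq F0) pr) hR.
rewrite ln_mult ?ln_mult ?ln_mult in hl; try apply: Rmult_lt_0_compat; try done.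
rewrite !ln_pow // !mult_INR minus_INR in hl; last by apply/leP.
have d1 := ln_succ_le hq.
have d2 := ln_succ_le (ltnW hr).
have hpd2 : INR p * (ln (INR r.+1) - ln (INR r)) <= INR p * / INR r.
  by apply: Rmult_le_compat_l; lra.
have n0 : 0 <= INR n by apply: pos_INR.
have hlnF' : INR n * (b * ln (INR k)) <= ln (INR F).
  by rewrite (_ : INR n * (b * ln (INR k)) = b * INR n * ln (INR k)) //; ring.
have e1 : INR n * (ln (INR q.+1) - ln (INR q)) <= INR n * ((b * ln (INR k)) / 3).
  by apply: Rmult_le_compat_l; lra.
have e2 : INR n * (INR p * (ln (INR r.+1) - ln (INR r))) <= INR n * ((b * ln (INR k)) / 3).
  by apply: Rmult_le_compat_l; lra.
have key2 : INR n * (b * ln (INR k)) <= 3 * (INR m * INR p * ln (INR r)) by lra.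
have den : 0 < 3 * INR p * ln (INR r).
  by apply: Rmult_lt_0_compat => //; lra.
apply: (Rmult_le_reg_l (3 * INR p * ln (INR r))) => //.
have -> : 3 * INR p * ln (INR r) * ((b * ln (INR k)) / (3 * INR p * ln (INR r)) * INR n) = INR n * (b * ln (INR k)).
  by field; lra.
lra.
Qed.

Theorem lemma3p3 (k : nat) (b : R) :
  (2 <= k)%nat -> 0 < b ->
  exists c : R, 0 < c /\
    forall (Z : finType) (S : {set {ffun Z -> 'I_k.+1}}),
      Rpower (INR k) (b * INR #|Z|) <= INR (FS S) ->
      exists W : {set Z}, c * INR #|Z| <= INR #|W| /\ restr_contains_full S W.
Proof.
move=> hk hb.
have kgt1 : 1 < INR k by apply: (lt_INR 1); apply/ltP.
have lnk : 0 < ln (INR k) by rewrite -ln_1; apply: ln_increasing; lra.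
have L0 : 0 < b * ln (INR k) by apply: Rmult_lt_0_compat.
have [q [hq3 q0]] := archimed_cor1 ((b * ln (INR k)) / 3) (ltac:(lra)).
have q0' : (0 < q)%nat by apply/ltP.
set p := (q * (k - 1))%nat.
have p0 : (0 < p)%nat by rewrite /p muln_gt0 q0' subn_gt0.
have p0R : 0 < INR p by apply: lt_0_INR; apply/ltP.
have [r0 [hr3 r00]] := archimed_cor1 ((b * ln (INR k)) / (3 * INR p)) (ltac:(apply: Rdiv_lt_0_compat; lra)).
have r00' : (0 < r0)%nat by apply/ltP.
set r := r0.+1.
have r0R : 0 < INR r0 by apply: lt_0_INR.
have rR : INR r = INR r0 + 1 by rewrite /r S_INR.
have hr1 : (1 < r)%nat by rewrite /r; lia.
have rgt1 : 1 < INR r by lra.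
have lnr : 0 < ln (INR r) by rewrite -ln_1; apply: ln_increasing; lra.
have hpr : INR p * / INR r <= (b * ln (INR k)) / 3.
  have h1 : / INR r <= / INR r0 by apply: Rinv_le_contravar; lra.
  have h2 : INR p * / INR r0 < INR p * ((b * ln (INR k)) / (3 * INR p))
    by apply: Rmult_lt_compat_l.
  have h3 : INR p * ((b * ln (INR k)) / (3 * INR p)) = (b * ln (INR k)) / 3 by field; lra.
  have := Rmult_le_compat_l (INR p) _ _ (ltac:(lra)) h1; lra.
exists ((b * ln (INR k)) / (3 * INR p * ln (INR r))); split.
  apply: Rdiv_lt_0_compat => //; nra.
move=> Z S H.
have hk' : (1 < k)%nat by [].
have M := main_ineq hk' q0' (qk_ineq q hk') setT S.
rewrite cardsT -FS_FSD in M.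
have hRp : 0 < Rpower (INR k) (b * INR #|Z|) by rewrite /Rpower; apply: exp_pos.
have F0 : (0 < FS S)%nat.
  case: (posnP (FS S)) => // e; rewrite e in H; have e0 : INR 0 = 0 by []; lra.
have Sh0 : (0 < #|Sh setT S|)%nat.
  case: (posnP #|Sh setT S|) => // e; rewrite e exp0n // mul0n in M.
  by move: M; rewrite leqn0 muln_eq0 expn_eq0 (negbTE (lt0n_neq0 F0)) orbF => /andP[/eqP q00]; lia.
have [W0 hW0] : exists W0, W0 \in Sh setT S by apply/card_gt0P.
case: (@arg_maxnP _ W0 (mem (Sh setT S)) (fun W => #|W|) hW0) => W hW hmax.
have hm : (#|W| <= #|Z|)%nat by apply: max_card.
have C := count_small (Wf := Sh setT S) (m := #|W|) (r := r) (ltac:(rewrite /r; lia)) hmax.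
have := final_real hk' q0' p0 hr1 hm M C H (ltac:(lra)) hpr.
move=> hfin; exists W; split; first exact: hfin.
have hW' : W \in Sh setT S by [].
move: hW'; rewrite inE => /andP [_ hs].
exact: shat_restr.
Qed.
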